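(* Let $f\colon A\to X$ and $g\colon B\to Y$ be monomorphisms in $\mathsf{cSet}^+$, and let $\odot$ be either $\otimes$ or $\circledast$. Then: (1) if both $f$ and $g$ are regular, then $f\hat\odot g$ is regular; (2) if either $f$ or $g$ is entire, then $f\hat\odot g$ is entire; (3) if both $f$ and $g$ are entire, then $f\hat\odot g$ is an isomorphism; (4) if either $f$ or $g$ is entire, then the commutative square with top map $(A\otimes Y)\cup_{A\otimes B}(X\otimes B)\to(A\circledast Y)\cup_{A\circledast B}(X\circledast B)$ induced by $\mu$, left map $f\hat\otimes g$, right map $f\hat\circledast g$, and bottom map $\mu_{X,Y}\colon X\otimes Y\to X\circledast Y$, is a pushout in $\mathsf{cSet}^+$.
   Context: The box category $\square$ is the subcategory of posets with objects $[1]^n=\{0<1\}^n$ and morphisms generated by faces $\partial_{i,\varepsilon}$ (insert $\varepsilon$ as $i$-th coordinate), degeneracies $\sigma_i$ (delete $i$-th coordinate) and connections $\gamma_{i,1},\gamma_{i,0}$ (replace $x_i,x_{i+1}$ by their max, resp. min). Cubical sets are presheaves on $\square$, operators act on the right, and a cube is degenerate if of the form $x\sigma_i$ or $x\gamma_{i,\varepsilon}$. The geometric product $\otimes$ on cubical sets is the Day convolution of $[1]^m\otimes[1]^n=[1]^{m+n}$; every non-degenerate cube of $X\otimes Y$ is $x\otimes y$ for a unique pair of non-degenerate cubes $x\in X_k$, $y\in Y_l$, and $x\otimes y$ has dimension $k+l$. A marked cubical set is a cubical set with a set of marked cubes of positive dimension containing all degenerate cubes; maps preserve marked cubes; $\mathsf{cSet}^+$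 is this category and $\upsilon$ the forgetful functor to cubical sets. Colimits are computed on underlying cubical sets, a cube being marked iff it is the image of a marked cube. A map $f\colon X\to Y$ in $\mathsf{cSet}^+$ is regular if a cube $x$ of $X$ is marked iff $f(x)$ is marked, and entire if $\upsilon f$ is an isomorphism. Lax Gray tensor $X\otimes Y$: the geometric product $\upsilon X\otimes\upsilon Y$ with non-degenerate $x\otimes y$ marked iff $x$ or $y$ is marked. Pseudo Gray tensor $X\circledast Y$: the geometric product with non-degenerate $x\otimes y$ unmarked iff ($x$ is a $0$-cube and $y$ unmarked) or ($x$ unmarked and $y$ a $0$-cube). $\mu_{X,Y}\colon X\otimes Y\to X\circledast Y$ is the identity on underlying cubical sets. For a bifunctor $\odot$ and maps $f\colon A\to X$, $g\colon B\to Y$, the Leibniz product is $f\hat\odot g\colon (X\odot B)\cup_{A\odot B}(A\odot Y)\to X\odot Y$. *)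

(* Defs.v *)
From mathcomp Require Import all_boot.
From mathcomp Require Import zify.
From Stdlib Require Import FunctionalExtensionality.
Set Implicit Arguments. Unset Strict Implicit. Unset Printing Implicit Defensive.

Definition pt (n : nat) := n.-tuple bool.
Definition mkpt (n : nat) (F : nat -> bool) : pt n := [tuple F (nat_of_ord j) | j < n].

Lemma nth_mkpt n F j : nth false (mkpt n F) j = if j < n then F j else false.
Proof.
case: ltnP => Hj.
  by rewrite -[j]/(nat_of_ord (Ordinal Hj)) nth_mktuple.
by rewrite nth_default // size_tuple.
Qed.

Lemma pt_ext n (s t : pt n) : (forall j, j < n -> nth false s j = nth false t j) -> s = t.
Proof.
move=> H; apply: val_inj; apply: (@eq_from_nth _ false); first by rewrite !size_tuple.
by move=> j; rewrite size_tuple => /H.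
Qed.

Definition face (m n i : nat) (e : bool) (x : pt m) : pt n :=
  mkpt n (fun j => if j < i then nth false x j else if j == i then e else nth false x j.-1).
Definition degen (m n i : nat) (x : pt m) : pt n :=
  mkpt n (fun j => nth false x (if j < i then j else j.+1)).
Definition conn (m n i : nat) (e : bool) (x : pt m) : pt n :=
  mkpt n (fun j => if j < i then nth false x j
                   else if j == i then
                     (if e then nth false x i || nth false x i.+1
                      else nth false x i && nth false x i.+1)
                   else nth false x j.+1).

Inductive box : forall m n : nat, (pt m -> pt n) -> Prop :=
| box_id n : box (fun x : pt n => x)
| box_comp m n p (f : pt m -> pt n) (g : pt n -> pt p) :
    box f -> box g -> box (fun x => g (f x))
| box_face m n i e : n = m.+1 -> i <= m -> box (@face m n i e)
| box_degen m n i : m = n.+1 -> i <= n -> box (@degen m n i)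
| box_conn m n i e : m = n.+1 -> i < n -> box (@conn m n i e).

Definition prodpt m1 n1 m2 n2 (f : pt m1 -> pt n1) (g : pt m2 -> pt n2)
  (x : pt (m1 + m2)) : pt (n1 + n2) :=
  mkpt (n1 + n2) (fun j => if j < n1 then nth false (f (mkpt m1 (fun a => nth false x a))) j
                           else nth false (g (mkpt m2 (fun a => nth false x (m1 + a)))) (j - n1)).

Ltac split_ifs := repeat match goal with |- context [if ?b then _ else _] =>
   lazymatch b with context [if _ then _ else _] => fail | _ =>
   let H := fresh "H" in case: (boolP b) => H end end.
Ltac fin := try lia; try (congr (nth _ _ _); lia);
  try (congr (_ || _); congr (nth _ _ _); lia);
  try (congr (_ && _); congr (nth _ _ _); lia).

Lemma box_prodl m n l (f : pt m -> pt n) : box f -> box (prodpt f (fun x : pt l => x)).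
Proof.
elim=> {m n f}.
- move=> n. have -> : prodpt (fun x : pt n => x) (fun x : pt l => x) = (fun x => x).
    apply: functional_extensionality => x; apply: pt_ext => j Hj.
    rewrite /prodpt !nth_mkpt; split_ifs; fin.
  exact: box_id.
- move=> m n p f g _ IHf _ IHg.
  have -> : prodpt (fun x => g (f x)) (fun x : pt l => x) =
            (fun x => prodpt g (fun x : pt l => x) (prodpt f (fun x : pt l => x) x)).
    apply: functional_extensionality => x; apply: pt_ext => j Hj.
    have E : mkpt n (fun a => nth false (prodpt f (fun x : pt l => x) x) a) =
             f (mkpt m (fun a => nth false x a)).
      apply: pt_ext => a Ha; rewrite /prodpt !nth_mkpt; split_ifs; fin.
    rewrite {1 2}/prodpt E !nth_mkpt; split_ifs; fin.
  exact: (box_comp IHf IHg).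
- move=> m n i e -> Hi.
  have -> : prodpt (@face m m.+1 i e) (fun x : pt l => x) = @face (m + l) (m.+1 + l) i e.
    apply: functional_extensionality => x; apply: pt_ext => j Hj.
    rewrite /prodpt /face !nth_mkpt; split_ifs; fin.
  by apply: (@box_face (m + l) (m.+1 + l) i e); lia.
- move=> m n i -> Hi.
  have -> : prodpt (@degen n.+1 n i) (fun x : pt l => x) = @degen (n.+1 + l) (n + l) i.
    apply: functional_extensionality => x; apply: pt_ext => j Hj.
    rewrite /prodpt /degen !nth_mkpt; split_ifs; fin.
  by apply: (@box_degen (n.+1 + l) (n + l) i); lia.
- move=> m n i e -> Hi.
  have -> : prodpt (@conn n.+1 n i e) (fun x : pt l => x) = @conn (n.+1 + l) (n + l) i e.
    apply: functional_extensionality => x; apply: pt_ext => j Hj.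
    rewrite /prodpt /conn !nth_mkpt; split_ifs; fin.
  by apply: (@box_conn (n.+1 + l) (n + l) i e); lia.
Qed.

Lemma box_prodr k m n (g : pt m -> pt n) : box g -> box (prodpt (fun x : pt k => x) g).
Proof.
elim=> {m n g}.
- move=> n. have -> : prodpt (fun x : pt k => x) (fun x : pt n => x) = (fun x => x).
    apply: functional_extensionality => x; apply: pt_ext => j Hj.
    rewrite /prodpt !nth_mkpt; split_ifs; fin.
  exact: box_id.
- move=> m n p f g _ IHf _ IHg.
  have -> : prodpt (fun x : pt k => x) (fun x => g (f x)) =
            (fun x => prodpt (fun x : pt k => x) g (prodpt (fun x : pt k => x) f x)).
    apply: functional_extensionality => x; apply: pt_ext => j Hj.
    have E : mkpt n (fun a => nth false (prodpt (fun x : pt k => x) f x) (k + a)) =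
             f (mkpt m (fun a => nth false x (k + a))).
      apply: pt_ext => a Ha; rewrite /prodpt !nth_mkpt; split_ifs; fin.
    rewrite {1 2}/prodpt E !nth_mkpt; split_ifs; fin.
  exact: (box_comp IHf IHg).
- move=> m n i e -> Hi.
  have -> : prodpt (fun x : pt k => x) (@face m m.+1 i e) = @face (k + m) (k + m.+1) (k + i) e.
    apply: functional_extensionality => x; apply: pt_ext => j Hj.
    rewrite /prodpt /face !nth_mkpt; split_ifs; fin.
  by apply: (@box_face (k + m) (k + m.+1) (k + i) e); lia.
- move=> m n i -> Hi.
  have -> : prodpt (fun x : pt k => x) (@degen n.+1 n i) = @degen (k + n.+1) (k + n) (k + i).
    apply: functional_extensionality => x; apply: pt_ext => j Hj.
    rewrite /prodpt /degen !nth_mkpt; split_ifs; fin.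
  by apply: (@box_degen (k + n.+1) (k + n) (k + i)); lia.
- move=> m n i e -> Hi.
  have -> : prodpt (fun x : pt k => x) (@conn n.+1 n i e) = @conn (k + n.+1) (k + n) (k + i) e.
    apply: functional_extensionality => x; apply: pt_ext => j Hj.
    rewrite /prodpt /conn !nth_mkpt; split_ifs; fin.
  by apply: (@box_conn (k + n.+1) (k + n) (k + i) e); lia.
Qed.

Lemma box_prod m1 n1 m2 n2 (f : pt m1 -> pt n1) (g : pt m2 -> pt n2) :
  box f -> box g -> box (prodpt f g).
Proof.
move=> bf bg.
have -> : prodpt f g = (fun x => prodpt f (fun y : pt n2 => y) (prodpt (fun y : pt m1 => y) g x)).
  apply: functional_extensionality => x; apply: pt_ext => j Hj.
  rewrite /prodpt !nth_mkpt; split_ifs; fin.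
  - congr (nth _ (f _) _); apply: pt_ext => a Ha; rewrite !nth_mkpt; split_ifs; fin.
exact: (box_comp (box_prodr _ bg) (box_prodl _ bf)).
Qed.

(* The box category: morphisms [1]^m -> [1]^n are the maps of points  *)
(* generated (under composition, with identities) by faces,           *)
(* degeneracies and connections.  Coordinates are 0-based.            *)

Record Hom (m n : nat) := MkHom { hfun : pt m -> pt n; hbox : box hfun }.

Definition hid (n : nat) : Hom n n := MkHom (box_id n).
Definition hcomp m n p (g : Hom n p) (f : Hom m n) : Hom m p :=
  MkHom (box_comp (hbox f) (hbox g)).
Definition hprod m1 n1 m2 n2 (f : Hom m1 n1) (g : Hom m2 n2) : Hom (m1 + m2) (n1 + n2) :=
  MkHom (box_prod (hbox f) (hbox g)).

Record cset := CSet {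
  cell : nat -> Type;
  act : forall m n, Hom m n -> cell n -> cell m;
  act_id : forall n (x : cell n), act (hid n) x = x;
  act_comp : forall m n p (f : Hom m n) (g : Hom n p) (x : cell p),
      act (hcomp g f) x = act f (act g x) }.

Arguments act {c m n} f x.

Definition degenerate (X : cset) (n : nat) (x : cell X n) : Prop :=
  exists m (y : cell X m) (h : Hom n m), n = m.+1 /\ x = act h y /\
    ((exists i, i <= m /\ hfun h = @degen n m i) \/
     (exists i e, i < m /\ hfun h = @conn n m i e)).

Record cmap (X Y : cset) := CMap {
  cmfun :> forall n, cell X n -> cell Y n;
  cm_nat : forall m n (f : Hom m n) (x : cell X n),
      cmfun (act f x) = act f (cmfun x) }.
Arguments cmfun {X Y} c n x.

Record mcset := MCSet {
  under :> cset;
  marked : forall n, cell under n -> Prop;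
  marked_pos : forall x : cell under 0, ~ marked x;
  marked_deg : forall n (x : cell under n), degenerate x -> marked x }.
Arguments marked {m n} x.

Record mmap (X Y : mcset) := MMap {
  mmcmap :> cmap X Y;
  mm_marked : forall n (x : cell X n), marked x -> marked (mmcmap n x) }.

Definition mono (A X : mcset) (f : mmap A X) : Prop :=
  forall (Z : mcset) (h k : mmap Z A),
    (forall n (z : cell Z n), f n (h n z) = f n (k n z)) ->
    forall n (z : cell Z n), h n z = k n z.

Definition regular (X Y : mcset) (f : mmap X Y) : Prop :=
  forall n (x : cell X n), marked x <-> marked (f n x).

Definition entire (X Y : mcset) (f : mmap X Y) : Prop :=
  exists v : cmap Y X, (forall n (x : cell X n), v n (f n x) = x) /\
                       (forall n (y : cell Y n), f n (v n y) = y).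

Definition iso (X Y : mcset) (f : mmap X Y) : Prop :=
  exists v : mmap Y X, (forall n (x : cell X n), v n (f n x) = x) /\
                       (forall n (y : cell Y n), f n (v n y) = y).

Definition is_pushout (A B C P : mcset) (f : mmap A B) (g : mmap A C)
    (i : mmap B P) (j : mmap C P) : Prop :=
  (forall n (a : cell A n), i n (f n a) = j n (g n a)) /\
  forall (Z : mcset) (h : mmap B Z) (k : mmap C Z),
    (forall n (a : cell A n), h n (f n a) = k n (g n a)) ->
    exists u : mmap P Z,
      (forall n (b : cell B n), u n (i n b) = h n b) /\
      (forall n (c : cell C n), u n (j n c) = k n c) /\
      forall u' : mmap P Z,
        (forall n (b : cell B n), u' n (i n b) = h n b) ->
        (forall n (c : cell C n), u' n (j n c) = k n c) ->
        forall n (p : cell P n), u' n p = u n p.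

(* Geometric product = Day convolution, given by its universal         *)
(* property: a universal family X_k x Y_l -> T_{k+l}, natural in       *)
(* ([1]^k,[1]^l) in box x box.                                        *)

Definition bimor (X Y Z : cset) (s : forall k l, cell X k -> cell Y l -> cell Z (k + l)) :=
  forall k k' l l' (phi : Hom k' k) (psi : Hom l' l) (x : cell X k) (y : cell Y l),
    s k' l' (act phi x) (act psi y) = act (hprod phi psi) (s k l x y).

Record gprod (X Y : cset) := GProd {
  gp :> cset;
  gpt : forall k l, cell X k -> cell Y l -> cell gp (k + l);
  gpt_bimor : bimor gpt;
  gp_univ : forall (Z : cset) s, @bimor X Y Z s ->
    exists u : cmap gp Z, (forall k l x y, u _ (gpt x y) = s k l x y) /\
      forall v : cmap gp Z, (forall k l x y, v _ (gpt x y) = s k l x y) ->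
        forall n (z : cell gp n), v n z = u n z }.
Arguments gpt {X Y} g {k l} x y.

Definition tens (X Y : cset) (P : gprod X Y) k l n (e : k + l = n)
    (x : cell X k) (y : cell Y l) : cell P n :=
  eq_rect (k + l) (cell P) (gpt P x y) n e.

Definition lax_marked (X Y : mcset) (P : gprod X Y) n (z : cell P n) : Prop :=
  degenerate z \/
  exists k l (e : k + l = n) (x : cell X k) (y : cell Y l),
    ~ degenerate x /\ ~ degenerate y /\ z = tens P e x y /\ (marked x \/ marked y).

Definition pseudo_marked (X Y : mcset) (P : gprod X Y) n (z : cell P n) : Prop :=
  degenerate z \/
  exists k l (e : k + l = n) (x : cell X k) (y : cell Y l),
    ~ degenerate x /\ ~ degenerate y /\ z = tens P e x y /\
    ~ ((k = 0 /\ ~ marked y) \/ (~ marked x /\ l = 0)).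

Lemma lax_marked_pos (X Y : mcset) (P : gprod X Y) (z : cell P 0) : ~ lax_marked z.
Proof.
case=> [[m [y [h [E _]]]] //|[k [l [e [x [y [_ [_ [_ H]]]]]]]]].
case: k l e x y H => [|k] [|l] //= e x y [] H.
- exact: (marked_pos H).
- exact: (marked_pos H).
Qed.

Lemma pseudo_marked_pos (X Y : mcset) (P : gprod X Y) (z : cell P 0) : ~ pseudo_marked z.
Proof.
case=> [[m [y [h [E _]]]] //|[k [l [e [x [y [_ [_ [_ H]]]]]]]]].
case: k l e x y H => [|k] [|l] //= e x y H.
by apply: H; left; split => //; exact: marked_pos.
Qed.

Inductive gray := LaxG | PseudoG.

Definition gmarked (o : gray) (X Y : mcset) (P : gprod X Y) n (z : cell P n) : Prop :=
  match o with LaxG => lax_marked z | PseudoG => pseudo_marked z end.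

Lemma gmarked_pos o (X Y : mcset) (P : gprod X Y) (z : cell P 0) : ~ gmarked o z.
Proof. case: o; [exact: lax_marked_pos | exact: pseudo_marked_pos]. Qed.

Lemma gmarked_deg o (X Y : mcset) (P : gprod X Y) n (z : cell P n) :
  degenerate z -> gmarked o z.
Proof. by case: o => d; left. Qed.

Definition GT (o : gray) (X Y : mcset) (P : gprod X Y) : mcset :=
  @MCSet (gp P) (@gmarked o X Y P) (@gmarked_pos o X Y P) (@gmarked_deg o X Y P).

Notation Lax := (GT LaxG).
Notation Pseudo := (GT PseudoG).

Lemma lax_pseudo (X Y : mcset) (P : gprod X Y) n (z : cell P n) :
  lax_marked z -> pseudo_marked z.
Proof.
case=> [d|[k [l [e [x [y [dx [dy [Ez H]]]]]]]]]; [by left|right].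
exists k, l, e, x, y; split=> //; split=> //; split=> //.
case=> [[k0 Hy]|[Hx l0]].
- subst k; case: H => H; last by [].
  exact: (marked_pos H).
- subst l; case: H => H; first by [].
  exact: (marked_pos H).
Qed.

Definition idcmap (X : cset) : cmap X X := @CMap X X (fun n x => x) (fun m n f x => erefl).

Definition mu (X Y : mcset) (P : gprod X Y) : mmap (Lax P) (Pseudo P) :=
  @MMap (Lax P) (Pseudo P) (idcmap P) (@lax_pseudo X Y P).

Definition tensor_map (A B X Y : cset) (f : cmap A X) (g : cmap B Y)
    (P : gprod A B) (Q : gprod X Y) (u : cmap P Q) : Prop :=
  forall k l (a : cell A k) (b : cell B l), u _ (gpt P a b) = gpt Q (f k a) (g l b).

Definition leibniz (o : gray) (A B X Y : mcset) (f : mmap A X) (g : mmap B Y)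
    (PAB : gprod A B) (PXB : gprod X B) (PAY : gprod A Y) (PXY : gprod X Y)
    (P : mcset) (i : mmap (GT o PXB) P) (j : mmap (GT o PAY) P)
    (h : mmap P (GT o PXY)) : Prop :=
  exists (fB : mmap (GT o PAB) (GT o PXB)) (Ag : mmap (GT o PAB) (GT o PAY))
         (Xg : mmap (GT o PXB) (GT o PXY)) (fY : mmap (GT o PAY) (GT o PXY)),
    tensor_map f (idcmap B) (mmcmap fB) /\ tensor_map (idcmap A) g (mmcmap Ag) /\
    tensor_map (idcmap X) g (mmcmap Xg) /\ tensor_map f (idcmap Y) (mmcmap fY) /\
    is_pushout fB Ag i j /\
    (forall n (b : cell (GT o PXB) n), h n (i n b) = Xg n b) /\
    (forall n (c : cell (GT o PAY) n), h n (j n c) = fY n c).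
Arguments leibniz o {A B X Y} f g PAB PXB PAY PXY {P} i j h.

(* Main.v *)
Require Import Defs.
From mathcomp Require Import all_boot.
From mathcomp Require Import zify.
From Stdlib Require Import FunctionalExtensionality ProofIrrelevance PropExtensionality Classical.
Set Implicit Arguments. Unset Strict Implicit. Unset Printing Implicit Defensive.


Lemma hom_eq m n (f g : Hom m n) : (forall x, hfun f x = hfun g x) -> f = g.
Proof.
case: f g => F HF [G HG] /= E.
have EFG : F = G by apply: functional_extensionality.
subst G. by rewrite (proof_irrelevance _ HF HG).
Qed.

Lemma act_ext (X : cset) m n (f g : Hom m n) (x : cell X n) :
  (forall p, hfun f p = hfun g p) -> act f x = act g x.
Proof. by move=> /hom_eq ->. Qed.

Lemma box_ext m n (F G : pt m -> pt n) : box F -> (forall x, F x = G x) -> box G.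
Proof. move=> H E. have -> : G = F by apply: functional_extensionality => x; rewrite E. exact H. Qed.

Lemma act_comp' (X : cset) m n p (F : pt m -> pt n) (G : pt n -> pt p)
   (bF : box F) (bG : box G) (bFG : box (fun x => G (F x))) (z : cell X p) :
  act (MkHom bFG) z = act (MkHom bF) (act (MkHom bG) z).
Proof.
rewrite -act_comp. exact: act_ext.
Qed.

Definition elem n m (h : pt n -> pt m) : Prop :=
  n = m.+1 /\ ((exists i, i <= m /\ h = @degen n m i) \/ (exists i e, i < m /\ h = @conn n m i e)).
Definition isface m n (d : pt m -> pt n) : Prop :=
  n = m.+1 /\ exists i c, i <= m /\ d = @face m n i c.

Lemma elem_box n m (h : pt n -> pt m) : elem h -> box h.
Proof.
case=> E [[i [Hi ->]]|[i [e [Hi ->]]]]; [exact: box_degen | exact: box_conn].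
Qed.

Lemma isface_box m n (d : pt m -> pt n) : isface d -> box d.
Proof. case=> E [i [c [Hi ->]]]; exact: box_face. Qed.

Ltac ptx := apply: pt_ext => ? ?; rewrite /face /degen /conn /prodpt !nth_mkpt; split_ifs; fin.

Lemma CI n m (h : pt n -> pt m) (d : pt m -> pt n) : elem h -> isface d ->
  (forall x, h (d x) = x) \/
  exists q (h' : pt m -> pt q) (d' : pt q -> pt m),
    elem h' /\ isface d' /\ forall x, h (d x) = d' (h' x).
Proof.
case=> En [[j [Hj ->]]|[j [e [Hj ->]]]] [_ [i [c [Hi ->]]]]; subst n.
- case: (ltngtP i j) => Hij.
  + right. case: m {h d} Hj Hi Hij => [|q] Hj Hi Hij; first by lia.
    exists q, (@degen q.+1 q j.-1), (@face q q.+1 i c); split; [|split].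
    * split=> //; left; exists j.-1; split=> //; lia.
    * split=> //; exists i, c; split=> //; lia.
    * move=> x; ptx.
  + right. case: m {h d} Hj Hi Hij => [|q] Hj Hi Hij; first by lia.
    exists q, (@degen q.+1 q j), (@face q q.+1 i.-1 c); split; [|split].
    * split=> //; left; exists j; split=> //; lia.
    * split=> //; exists i.-1, c; split=> //; lia.
    * move=> x; ptx.
  + left; subst i => x; ptx.
- case: m {h d} Hj Hi => [|q] Hj Hi; first by lia.
  case: (ltnP i j) => Hij.
  + right. exists q, (@conn q.+1 q j.-1 e), (@face q q.+1 i c); split; [|split].
    * split=> //; right; exists j.-1, e; split=> //; lia.
    * split=> //; exists i, c; split=> //; lia.
    * move=> x; ptx.
  case: (ltnP j.+1 i) => Hji.
  + right. exists q, (@conn q.+1 q j e), (@face q q.+1 i.-1 c); split; [|split].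
    * split=> //; right; exists j, e; split=> //; lia.
    * split=> //; exists i.-1, c; split=> //; lia.
    * move=> x; ptx.
  case: (eqVneq c e) => Hce.
  + subst c; right. exists q, (@degen q.+1 q j), (@face q q.+1 j e); split; [|split].
    * split=> //; left; exists j; split=> //; lia.
    * split=> //; exists j, e; split=> //; lia.
    * move=> x; ptx.
  + left => x; case: e c Hce {Hi} => [] [] // _; ptx; rewrite ?orbF ?andbT ?orFb ?andTb; fin.
Qed.

Inductive epi : forall n m, (pt n -> pt m) -> Prop :=
| epi_id n : epi (fun x : pt n => x)
| epi_cons n n' m (h : pt n -> pt n') (E : pt n' -> pt m) : elem h -> epi E -> epi (fun x => E (h x)).

Inductive fcomp : forall n m, (pt n -> pt m) -> Prop :=
| fc_id n : fcomp (fun x : pt n => x)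
| fc_cons a b c (d : pt a -> pt b) (G : pt b -> pt c) : isface d -> fcomp G -> fcomp (fun x => G (d x)).

Lemma epi_box n m (E : pt n -> pt m) : epi E -> box E.
Proof.
elim=> {n m E}; first exact: box_id.
move=> n n' m h E /elem_box bh _ bE; exact: box_comp bh bE.
Qed.

Lemma fcomp_box n m (E : pt n -> pt m) : fcomp E -> box E.
Proof.
elim=> {n m E}; first exact: box_id.
move=> a b c d G /isface_box bh _ bE; exact: box_comp bh bE.
Qed.

Lemma epi_face n m (E : pt n -> pt m) : epi E -> forall p (d : pt p -> pt n), isface d ->
  exists r (E' : pt p -> pt r) (G : pt r -> pt m), epi E' /\ fcomp G /\ forall x, E (d x) = G (E' x).
Proof.
elim=> {n m E}.
- move=> n p d Hd. exists p, (fun x => x), (fun x => (fun y => y) (d x)); split; [exact: epi_id|split=> //].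
  exact: fc_cons Hd (fc_id n).
- move=> n n' m h E Hh HE IH p d Hd.
  have Epn : p = n'. by case: Hh => E1 _; case: Hd => E2 _; lia.
  subst p.
  case: (CI Hh Hd) => [Hid|[q [h' [d' [Hh' [Hd' Ecom]]]]]].
  + exists m, E, (fun x => x); split=> //; split; first exact: fc_id.
    by move=> x; rewrite Hid.
  + case: (IH q d' Hd') => [r [E'' [G [HE'' [HG Ecom']]]]].
    exists r, (fun x => E'' (h' x)), G; split; first exact: epi_cons Hh' HE''.
    split=> // x; by rewrite Ecom Ecom'.
Qed.



Section GP.
Variables (X Y : cset) (P : gprod X Y).

Definition istens n (z : cell P n) : Prop :=
  exists k l (e : k + l = n) (x : cell X k) (y : cell Y l), z = tens P e x y.

Lemma tens_face p n (d : pt p -> pt n) (Hd : isface d) (bd : box d) (z : cell P n) :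
  istens z -> istens (act (MkHom bd) z).
Proof.
case=> k [l [e [x [y Ez]]]]; subst z n.
case: Hd => En [i [c [Hi Ed]]]; subst d.
case: (ltnP i k) => Hik.
- case: k x En Hi Hik bd => [|k] x En Hi Hik bd; first by lia.
  have e' : k + l = p by lia. subst p.
  exists k, l, erefl, (act (MkHom (@box_face k k.+1 i c erefl ltac:(lia))) x), y.
  rewrite /tens /= -{2}(act_id y) (gpt_bimor P).
  apply: act_ext => q /=. ptx.
- case: l y En Hi Hik bd => [|l] y En Hi Hik bd; first by lia.
  have e' : k + l = p by lia. subst p.
  exists k, l, erefl, x, (act (MkHom (@box_face l l.+1 (i - k) c erefl ltac:(lia))) y).
  rewrite /tens /= -{2}(act_id x) (gpt_bimor P).
  apply: act_ext => q /=. ptx.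
Qed.
End GP.

Lemma prod_degen_l m0 l i : i <= m0 -> prodpt (@degen m0.+1 m0 i) (fun x : pt l => x) = @degen (m0.+1 + l) (m0 + l) i.
Proof. move=> Hi; apply: functional_extensionality => x; ptx. Qed.
Lemma prod_conn_l m0 l i e : i < m0 -> prodpt (@conn m0.+1 m0 i e) (fun x : pt l => x) = @conn (m0.+1 + l) (m0 + l) i e.
Proof. move=> Hi; apply: functional_extensionality => x; ptx. Qed.
Lemma prod_degen_r k m0 i : i <= m0 -> prodpt (fun x : pt k => x) (@degen m0.+1 m0 i) = @degen (k + m0.+1) (k + m0) (k + i).
Proof. move=> Hi; apply: functional_extensionality => x; ptx. Qed.
Lemma prod_conn_r k m0 i e : i < m0 -> prodpt (fun x : pt k => x) (@conn m0.+1 m0 i e) = @conn (k + m0.+1) (k + m0) (k + i) e.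
Proof. move=> Hi; apply: functional_extensionality => x; ptx. Qed.

Section GP2.
Variables (X Y : cset) (P : gprod X Y).

Definition ndtens n (z : cell P n) : Prop :=
  exists k l (e : k + l = n) (x : cell X k) (y : cell Y l),
    ~ degenerate x /\ ~ degenerate y /\ z = tens P e x y.

Lemma tens_deg n (z : cell P n) : istens z -> degenerate z \/ ndtens z.
Proof.
case=> k [l [e [x [y Ez]]]]; subst z n.
case: (classic (degenerate x)) => [[m0 [x0 [h [Ek [Ex Hh]]]]]|ndx].
  left; subst k x; exists (m0 + l), (gpt P x0 y), (hprod h (hid l)); split; first by lia.
  split; first by rewrite /tens /= -{1}(act_id y) (gpt_bimor P).
  case: Hh => [[i [Hi Hh]]|[i [e [Hi Hh]]]]; [left; exists i|right; exists i, e]; split; try lia;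
  rewrite /= Hh; [exact: prod_degen_l Hi | exact: prod_conn_l Hi].
case: (classic (degenerate y)) => [[m0 [y0 [h [El [Ey Hh]]]]]|ndy].
  left; subst l y; exists (k + m0), (gpt P x y0), (hprod (hid k) h); split; first by lia.
  split; first by rewrite /tens /= -{1}(act_id x) (gpt_bimor P).
  case: Hh => [[i [Hi Hh]]|[i [e [Hi Hh]]]]; [left; exists (k + i)|right; exists (k + i), e]; split; try lia;
  rewrite /= Hh; [exact: prod_degen_r Hi | exact: prod_conn_r Hi].
by right; exists k, l, erefl, x, y.
Qed.

Lemma fcomp_tens n m (G : pt n -> pt m) (HG : fcomp G) (bG : box G) (t : cell P m) :
  istens t -> istens (act (MkHom bG) t).
Proof.
elim: HG bG t => {n m G}.
- move=> n bG t Ht. by rewrite (act_ext _ (g := hid n)) // act_id.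
- move=> a b c d G Hd HG IH bG t Ht.
  rewrite (act_comp' (isface_box Hd) (fcomp_box HG)).
  apply: tens_face => //. exact: IH.
Qed.

Definition Dp n (z : cell P n) : Prop :=
  exists n' (E : pt n -> pt n') (bE : box E) (t : cell P n'), epi E /\ istens t /\ z = act (MkHom bE) t.

Lemma Dp_act m n (F : pt m -> pt n) : box F -> forall (bF : box F) (z : cell P n), Dp z -> Dp (act (MkHom bF) z).
Proof.
elim=> {m n F}.
- move=> n bF z Dz. by rewrite (act_ext _ (g := hid n)) // act_id.
- move=> m n p f g bf IHf bg IHg bF z Dz.
  rewrite (act_comp' bf bg). exact: IHf (IHg _ _ Dz).
- move=> m n i e En Hi bF z [n' [E [bE [t [HE [Ht Ez]]]]]]; subst z.
  have Hd : isface (@face m n i e) by split=> //; exists i, e.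
  case: (epi_face HE Hd) => [r [E' [G [HE' [HG Ecom]]]]].
  exists r, E', (epi_box HE'), (act (MkHom (fcomp_box HG)) t); split=> //; split.
    exact: fcomp_tens.
  rewrite -!act_comp; apply: act_ext => q /=; exact: Ecom.
- move=> m n i Em Hi bF z [n' [E [bE [t [HE [Ht Ez]]]]]]; subst z.
  have Hh : elem (@degen m n i) by split=> //; left; exists i.
  exists n', (fun x => E (@degen m n i x)), (box_comp bF bE), t; split; first exact: epi_cons Hh HE.
  split=> //; rewrite -act_comp; exact: act_ext.
- move=> m n i e Em Hi bF z [n' [E [bE [t [HE [Ht Ez]]]]]]; subst z.
  have Hh : elem (@conn m n i e) by split=> //; right; exists i, e.
  exists n', (fun x => E (@conn m n i e x)), (box_comp bF bE), t; split; first exact: epi_cons Hh HE.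
  split=> //; rewrite -act_comp; exact: act_ext.
Qed.

Lemma Dp_cases n (z : cell P n) : Dp z -> degenerate z \/ ndtens z.
Proof.
case=> n' [E [bE [t [HE [Ht Ez]]]]]; subst z.
case: HE bE t Ht => {n n' E}.
- move=> n bE t Ht. rewrite (act_ext _ (g := hid n)) // act_id. exact: tens_deg.
- move=> n n'' m h E Hh HE bE t Ht. left.
  case: (Hh) => En [[i [Hi Eh]]|[i [e [Hi Eh]]]].
  + exists n'', (act (MkHom (epi_box HE)) t), (MkHom (elem_box Hh)); split=> //; split.
      rewrite -act_comp; exact: act_ext.
    by left; exists i.
  + exists n'', (act (MkHom (epi_box HE)) t), (MkHom (elem_box Hh)); split=> //; split.
      rewrite -act_comp; exact: act_ext.
    by right; exists i, e.
Qed.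
End GP2.


Lemma sub_eq (A : Type) (Q : A -> Prop) (a b : {x | Q x}) : proj1_sig a = proj1_sig b -> a = b.
Proof. case: a b => a Ha [b Hb] /= E; subst b; by rewrite (proof_irrelevance _ Ha Hb). Qed.

Section Zsub.
Variables (C : cset) (Ip : forall n, cell C n -> Prop)
  (Icl : forall m n (f : Hom m n) (z : cell C n), Ip z -> Ip (act f z)).

Definition zcell n := {zp : cell C n * Prop | Ip zp.1 -> zp.2}.
Definition zact m n (f : Hom m n) (z : zcell n) : zcell m :=
  exist (fun zp : cell C m * Prop => Ip zp.1 -> zp.2)
    (act f (proj1_sig z).1, (proj1_sig z).2 \/ Ip (act f (proj1_sig z).1)) (fun H => or_intror H).

Lemma zact_id n (z : zcell n) : zact (hid n) z = z.
Proof.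
apply: sub_eq; case: z => [[z p] H] /=; rewrite act_id; congr pair.
apply: propositional_extensionality; split; [case=> //; exact: H | by left].
Qed.

Lemma zact_comp m n p (f : Hom m n) (g : Hom n p) (z : zcell p) :
  zact (hcomp g f) z = zact f (zact g z).
Proof.
apply: sub_eq; case: z => [[z q] H] /=; rewrite act_comp; congr pair.
apply: propositional_extensionality; split.
- case; [by move=> ?; left; left | by right].
- case; [case; [by left| by move=> /(Icl f) ?; right] | by right].
Qed.

Definition Zsub : cset := @CSet zcell zact zact_id zact_comp.

Definition u1fun n (z : cell C n) : cell Zsub n :=
  exist (fun zp : cell C n * Prop => Ip zp.1 -> zp.2) (z, True) (fun _ => I).
Definition u2fun n (z : cell C n) : cell Zsub n :=
  exist (fun zp : cell C n * Prop => Ip zp.1 -> zp.2) (z, Ip z) (fun H => H).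

Lemma u1_nat m n (f : Hom m n) (z : cell C n) : u1fun (act f z) = act f (u1fun z).
Proof.
apply: sub_eq => /=; congr pair; apply: propositional_extensionality; split=> //; by left.
Qed.
Lemma u2_nat m n (f : Hom m n) (z : cell C n) : u2fun (act f z) = act f (u2fun z).
Proof.
apply: sub_eq => /=; congr pair; apply: propositional_extensionality; split; first by right.
case=> //; exact: Icl.
Qed.

Definition u1 : cmap C Zsub := CMap u1_nat.
Definition u2 : cmap C Zsub := CMap u2_nat.

Lemma u12 n (z : cell C n) : u1 n z = u2 n z -> Ip z.
Proof.
move=> /(f_equal (fun w => (proj1_sig w).2)) /= <-. done.
Qed.
End Zsub.

Section Zmax.
Variable C : cset.
Lemma zmax_pos (x : cell C 0) : ~ (0 < 0). Proof. by []. Qed.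
Lemma zmax_deg n (x : cell C n) : degenerate x -> 0 < n.
Proof. case=> m [_ [_ [E _]]]; by rewrite E. Qed.
Definition Zmax : mcset := @MCSet C (fun n _ => 0 < n) zmax_pos zmax_deg.
End Zmax.

Lemma marked_gt0 (X : mcset) n (x : cell X n) : marked x -> 0 < n.
Proof. case: n x => // x /marked_pos. done. Qed.

Definition tomax (X : mcset) (C : cset) (u : cmap X C) : mmap X (Zmax C) :=
  @MMap X (Zmax C) u (fun n x H => marked_gt0 H).

Section Gen.
Variables (X Y : cset) (P : gprod X Y).

Definition Igen n (z : cell P n) : Prop :=
  exists k l (phi : Hom n (k + l)) (x : cell X k) (y : cell Y l), z = act phi (gpt P x y).

Lemma Igen_cl m n (f : Hom m n) (z : cell P n) : Igen z -> Igen (act f z).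
Proof.
case=> k [l [phi [x [y ->]]]]; exists k, l, (hcomp phi f), x, y; by rewrite act_comp.
Qed.

Lemma gen_all n (z : cell P n) : Igen z.
Proof.
apply: (@u12 P (@Igen) Igen_cl).
pose s k l (x : cell X k) (y : cell Y l) := @u1 P (@Igen) Igen_cl _ (gpt P x y).
have bs : bimor s.
  move=> k k' l l' phi psi x y; rewrite /s (gpt_bimor P); exact: cm_nat.
case: (gp_univ P bs) => u [_ Hu].
rewrite (Hu (@u1 P (@Igen) Igen_cl)) // (Hu (@u2 P (@Igen) Igen_cl)) //.
move=> k l x y; apply: sub_eq => /=; congr pair.
apply: propositional_extensionality; split=> // _.
exists k, l, (hid _), x, y; by rewrite act_id.
Qed.

Lemma gp_cells n (z : cell P n) : degenerate z \/ ndtens z.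
Proof.
apply: Dp_cases.
case: (gen_all z) => k [l [phi [x [y ->]]]].
case: phi => F bF. apply: Dp_act => //.
exists (k + l), (fun x => x), (box_id _), (gpt P x y); split; first exact: epi_id.
split; first by exists k, l, erefl, x, y.
by rewrite (act_ext _ (g := hid _)) // act_id.
Qed.
End Gen.



Definition p1f n k (x : pt n) : pt k := mkpt k (fun j => nth false x j).
Definition p2f n k l (x : pt n) : pt l := mkpt l (fun j => nth false x (k + j)).
Definition i1f n k (c : bool) (x : pt k) : pt n := mkpt n (fun j => if j < k then nth false x j else c).
Definition i2f n k l (x : pt l) : pt n := mkpt n (fun j => if j < k then false else nth false x (j - k)).

Ltac ptq := apply: pt_ext => ? ?; rewrite /face /degen /conn /prodpt /p1f /p2f /i1f /i2f !nth_mkpt; split_ifs; fin.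

Lemma box_p1 n k : k <= n -> box (@p1f n k).
Proof.
move=> H; have [d ->] : exists d, n = k + d by exists (n - k); lia.
elim: d {H} => [|d IH].
  rewrite addn0; apply: (box_ext (box_id _)) => x; ptq.
apply: (box_ext (box_comp (@box_degen (k + d.+1) (k + d) (k + d) ltac:(lia) ltac:(lia)) IH)) => x; ptq.
Qed.

Lemma box_p2 n k l : k + l = n -> box (@p2f n k l).
Proof.
elim: k n => [|k IH] n H.
  subst n; apply: (box_ext (box_id _)) => x; ptq.
case: n H => [|n] H; first by lia.
apply: (box_ext (box_comp (@box_degen n.+1 n 0 erefl ltac:(lia)) (IH n ltac:(lia)))) => x; ptq.
Qed.

Lemma box_i1 n k c : k <= n -> box (@i1f n k c).
Proof.
move=> H; have [d ->] : exists d, n = k + d by exists (n - k); lia.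
elim: d {H} => [|d IH].
  rewrite addn0; apply: (box_ext (box_id _)) => x; ptq.
apply: (box_ext (box_comp IH (@box_face (k + d) (k + d.+1) (k + d) c ltac:(lia) ltac:(lia)))) => x; ptq.
Qed.

Lemma box_i2 n k l : k + l = n -> box (@i2f n k l).
Proof.
elim: k n => [|k IH] n H.
  subst n; apply: (box_ext (box_id _)) => x; ptq.
case: n H => [|n] H; first by lia.
apply: (box_ext (box_comp (IH n ltac:(lia)) (@box_face n n.+1 0 false erefl ltac:(lia)))) => x; ptq.
Qed.

Section Prod.
Variables (X Y : cset).
Definition pcell n := (cell X n * cell Y n)%type.
Definition pact m n (f : Hom m n) (z : pcell n) : pcell m := (act f z.1, act f z.2).
Lemma pact_id n (z : pcell n) : pact (hid n) z = z.
Proof. by case: z => x y; rewrite /pact /= !act_id. Qed.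
Lemma pact_comp m n p (f : Hom m n) (g : Hom n p) (z : pcell p) : pact (hcomp g f) z = pact f (pact g z).
Proof. by case: z => x y; rewrite /pact /= !act_comp. Qed.
Definition Prod : cset := @CSet pcell pact pact_id pact_comp.

Definition P1 n k (H : k <= n) : Hom n k := MkHom (box_p1 H).
Definition P2 n k l (H : k + l = n) : Hom n l := MkHom (box_p2 H).
Definition I1 n k c (H : k <= n) : Hom k n := MkHom (box_i1 c H).
Definition I2 n k l (H : k + l = n) : Hom l n := MkHom (box_i2 H).

Definition sproj k l (x : cell X k) (y : cell Y l) : cell Prod (k + l) :=
  (act (P1 (leq_addr l k)) x, act (P2 (erefl (k + l))) y).

Lemma sproj_bimor : bimor sproj.
Proof.
move=> k k' l l' phi psi x y; rewrite /sproj /= /pact /=.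
congr pair; rewrite -!act_comp; apply: act_ext => q /=; ptq.
Qed.

Lemma I1P1 n k c (H : k <= n) (H' : k <= n) (x : cell X k) : act (I1 c H) (act (P1 H') x) = x.
Proof. rewrite -act_comp -{2}(act_id x); apply: act_ext => q /=; ptq. Qed.
Lemma I2P2 n k l (H H' : k + l = n) (y : cell Y l) : act (I2 H) (act (P2 H') y) = y.
Proof. rewrite -act_comp -{2}(act_id y); apply: act_ext => q /=; ptq. Qed.

Variable P : gprod X Y.

Lemma tens_proj : exists u : cmap P Prod, forall k l n (e : k + l = n) x y (H1 : k <= n) (H2 : k + l = n),
  u n (tens P e x y) = (act (P1 H1) x, act (P2 H2) y).
Proof.
case: (gp_univ P sproj_bimor) => u [Hu _]; exists u => k l n e x y H1 H2.
subst n; rewrite /tens /= Hu /sproj; congr pair; exact: act_ext.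
Qed.
End Prod.

Section Prod2.
Variables (X Y : cset) (P : gprod X Y).

Lemma tens_inj k l n (e e' : k + l = n) (x x' : cell X k) (y y' : cell Y l) :
  tens P e x y = tens P e' x' y' -> x = x' /\ y = y'.
Proof.
case: (tens_proj P) => u Hu E.
have H1 : k <= n by lia.
move: (f_equal (u n) E); rewrite !(Hu _ _ _ _ _ _ H1 e) => [[E1 E2]].
split.
- by rewrite -(I1P1 false H1 H1 x) E1 I1P1.
- by rewrite -(I2P2 e e y) E2 I2P2.
Qed.

Lemma tens_dim k l k' l' n (e : k + l = n) (e' : k' + l' = n) (x : cell X k) (y : cell Y l)
   (x' : cell X k') (y' : cell Y l') :
  ~ degenerate x -> ~ degenerate y -> ~ degenerate x' -> ~ degenerate y' ->
  tens P e x y = tens P e' x' y' -> k = k'.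
Proof.
move=> ndx ndy ndx' ndy' E.
case: (tens_proj P) => u Hu.
have H1 : k <= n by lia. have H1' : k' <= n by lia.
move: (f_equal (u n) E); rewrite (Hu _ _ _ _ _ _ H1 e) (Hu _ _ _ _ _ _ H1' e') => [[E1 E2]].
case: (ltngtP k k') => // Hk.
- exfalso; apply: ndx'.
  case: k' x' e' H1' E E1 E2 Hk => [|q] x' e' H1' E E1 E2 Hk; first by lia.
  have Hkq : k <= q by lia.
  exists q, (act (MkHom (box_p1 Hkq)) x), (MkHom (@box_degen q.+1 q q erefl (leqnn q))).
  split=> //; split; last by left; exists q.
  rewrite -(I1P1 false H1' H1' x') -E1 -!act_comp; apply: act_ext => p /=; ptq.
- exfalso; apply: ndy'.
  case: l' y' e' E E2 => [|q] y' e' E E2; first by lia.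
  have Hkq : (k - k'.+1) + l = q by lia.
  exists q, (act (MkHom (box_p2 Hkq)) y), (MkHom (@box_degen q.+1 q 0 erefl (leq0n q))).
  split=> //; split; last by left; exists 0.
  rewrite -(I2P2 e' e' y') -E2 -!act_comp; apply: act_ext => p /=; ptq.
Qed.

Lemma ndtens_nondeg n (z : cell P n) : ndtens z -> ~ degenerate z.
Proof.
case=> k [l [e [x [y [ndx [ndy Ez]]]]]] [m [w [h [En [Ew Hh]]]]].
case: (tens_proj P) => u Hu.
have H1 : k <= n by lia.
have := Hu _ _ _ e x y H1 e; rewrite -Ez Ew (cm_nat u) /= /pact => -[E1 E2]; clear Ez Ew.
case: Hh => [[i [Hi Hh]]|[i [c [Hi Hh]]]].
- case: (ltnP i k) => Hik.
  + apply: ndx. case: k x e H1 E1 E2 Hik => [|q] x e H1 E1 E2 Hik; first by lia.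
    have Hq : q <= m by lia.
    exists q, (act (I1 false Hq) (u m w).1), (MkHom (@box_degen q.+1 q i erefl ltac:(lia))).
    split=> //; split; last by left; exists i; split=> //; lia.
    rewrite -(I1P1 false H1 H1 x) -E1 -!act_comp; apply: act_ext => p /=; rewrite Hh; ptq.
  + apply: ndy. case: l y e H1 E1 E2 Hik => [|q] y e H1 E1 E2 Hik; first by lia.
    have Hq : k + q = m by lia.
    exists q, (act (I2 Hq) (u m w).2), (MkHom (@box_degen q.+1 q (i - k) erefl ltac:(lia))).
    split=> //; split; last by left; exists (i - k); split=> //; lia.
    rewrite -(I2P2 e e y) -E2 -!act_comp; apply: act_ext => p /=; rewrite Hh; ptq.
- case: (ltnP i k) => Hik.
  + apply: ndx. case: k x e H1 E1 E2 Hik => [|q] x e H1 E1 E2 Hik; first by lia.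
    have Hq : q <= m by lia.
    case: (ltnP i q) => Hiq.
    * exists q, (act (I1 c Hq) (u m w).1), (MkHom (@box_conn q.+1 q i c erefl Hiq)).
      split=> //; split; last by right; exists i, c.
      rewrite -(I1P1 c H1 H1 x) -E1 -!act_comp; apply: act_ext => p /=; rewrite Hh; ptq.
    * have Eiq : i = q by lia. subst i.
      exists q, (act (I1 c Hq) (u m w).1), (MkHom (@box_degen q.+1 q q erefl (leqnn q))).
      split=> //; split; last by left; exists q.
      rewrite -(I1P1 c H1 H1 x) -E1 -!act_comp; apply: act_ext => p /=; rewrite Hh; ptq.
      
  + apply: ndy. case: l y e H1 E1 E2 Hik => [|q] y e H1 E1 E2 Hik; first by lia.
    have Hq : k + q = m by lia.
    exists q, (act (I2 Hq) (u m w).2), (MkHom (@box_conn q.+1 q (i - k) c erefl ltac:(lia))).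
    split=> //; split; last by right; exists (i - k), c; split=> //; lia.
    rewrite -(I2P2 e e y) -E2 -!act_comp; apply: act_ext => p /=; rewrite Hh; ptq.
Qed.
End Prod2.



Lemma ccomp_nat (X Y Z : cset) (g : cmap Y Z) (f : cmap X Y) m n (phi : Hom m n) (x : cell X n) :
  g m (f m (act phi x)) = act phi (g n (f n x)).
Proof. by rewrite !cm_nat. Qed.
Definition ccomp (X Y Z : cset) (g : cmap Y Z) (f : cmap X Y) : cmap X Z :=
  @CMap X Z (fun n x => g n (f n x)) (ccomp_nat g f).

Lemma gp_uniq (X Y Z : cset) (P : gprod X Y) (u v : cmap P Z) :
  (forall k l (x : cell X k) (y : cell Y l), u _ (gpt P x y) = v _ (gpt P x y)) -> forall n z, u n z = v n z.
Proof.
move=> E.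
pose s k l (x : cell X k) (y : cell Y l) := v _ (gpt P x y).
have bs : bimor s by move=> k k' l l' phi psi x y; rewrite /s (gpt_bimor P) cm_nat.
case: (gp_univ P bs) => w [_ Hw] n z.
by rewrite (Hw u E) (Hw v).
Qed.

Lemma tensor_ex (A B X Y : cset) (f : cmap A X) (g : cmap B Y) (P : gprod A B) (Q : gprod X Y) :
  exists u : cmap P Q, tensor_map f g u.
Proof.
pose s k l (a : cell A k) (b : cell B l) := gpt Q (f k a) (g l b).
have bs : bimor s by move=> k k' l l' phi psi x y; rewrite /s !cm_nat (gpt_bimor Q).
by case: (gp_univ P bs) => w [Hw _]; exists w.
Qed.

Lemma tensor_tens (A B X Y : cset) (f : cmap A X) (g : cmap B Y) (P : gprod A B) (Q : gprod X Y)
  (u : cmap P Q) : tensor_map f g u ->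
  forall k l n (e : k + l = n) a b, u n (tens P e a b) = tens Q e (f k a) (g l b).
Proof. move=> H k l n e a b; subst n; exact: H. Qed.

Definition cinv (X Y : cset) (f : cmap X Y) (v : cmap Y X) : Prop :=
  (forall n x, v n (f n x) = x) /\ (forall n y, f n (v n y) = y).

Lemma tensor_inv (A B X Y : cset) (f : cmap A X) (g : cmap B Y) (P : gprod A B) (Q : gprod X Y)
  (u : cmap P Q) (vf : cmap X A) (vg : cmap Y B) : tensor_map f g u -> cinv f vf -> cinv g vg ->
  exists w : cmap Q P, cinv u w /\ tensor_map vf vg w.
Proof.
move=> Hu [f1 f2] [g1 g2].
case: (tensor_ex vf vg Q P) => w Hw; exists w; split=> //; split.
- apply: (gp_uniq (u := ccomp w u) (v := idcmap P)) => k l x y /=.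
  by rewrite Hu Hw f1 g1.
- apply: (gp_uniq (u := ccomp u w) (v := idcmap Q)) => k l x y /=.
  by rewrite Hw Hu f2 g2.
Qed.

Section Rep.
Variable m : nat.
Lemma rep_id n (phi : Hom n m) : hcomp phi (hid n) = phi. Proof. exact: hom_eq. Qed.
Lemma rep_comp a b c (f : Hom a b) (g : Hom b c) (phi : Hom c m) :
  hcomp phi (hcomp g f) = hcomp (hcomp phi g) f. Proof. exact: hom_eq. Qed.
Definition Rep : cset := @CSet (fun n => Hom n m) (fun a b f phi => hcomp phi f) rep_id rep_comp.
Lemma rep_pos (x : cell Rep 0) : ~ degenerate x.
Proof. by case=> q [_ [_ [E _]]]. Qed.
Definition RepM : mcset := @MCSet Rep (@degenerate Rep) rep_pos (fun n x H => H).
End Rep.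

Lemma yo_nat (A : cset) m (a : cell A m) p n (f : Hom p n) (phi : Hom n m) :
  act (hcomp phi f) a = act f (act phi a).
Proof. exact: act_comp. Qed.

Definition yo (A : mcset) m (a : cell A m) : mmap (RepM m) A.
Proof.
refine (@MMap (RepM m) A (@CMap (Rep m) A (fun n phi => act phi a) (fun p n f phi => yo_nat a f phi)) _).
move=> n phi [q [psi [h [En [Ep Hh]]]]] /=.
apply: marked_deg; exists q, (act psi a), h; split=> //; split=> //.
rewrite Ep /= act_comp //.
Defined.

Lemma mono_injective (A X : mcset) (f : mmap A X) : mono f -> forall n (a b : cell A n), f n a = f n b -> a = b.
Proof.
move=> Hf m a b E.
have := Hf (RepM m) (yo a) (yo b) _ m (hid m); rewrite /= !act_id; apply.
move=> n phi /=; by rewrite !cm_nat E.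
Qed.

Lemma cmap_deg (X Y : cset) (f : cmap X Y) n (x : cell X n) : degenerate x -> degenerate (f n x).
Proof.
case=> m [y [h [En [Ex Hh]]]]; exists m, (f m y), h; split=> //; split=> //; by rewrite Ex cm_nat.
Qed.

Lemma inj_nondeg (X Y : cset) (f : cmap X Y) : (forall n (a b : cell X n), f n a = f n b -> a = b) ->
  forall n (x : cell X n), degenerate (f n x) -> degenerate x.
Proof.
move=> Hinj n x [m [y [h [En [Ex Hh]]]]].
have [s Hs] : exists s : Hom m n, forall p, hfun h (hfun s p) = p.
  case: Hh => [[i [Hi Hh]]|[i [e [Hi Hh]]]].
  - exists (MkHom (@box_face m n i false En Hi)) => p /=; rewrite Hh; subst n; ptx.
  - exists (MkHom (@box_face m n i (~~ e) En (ltnW Hi))) => p /=; rewrite Hh; subst n; ptx;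
    case: e {Hh} => //=; rewrite ?orbF ?andbT ?orFb ?andTb; fin.
have Ey : y = f m (act s x).
  by rewrite cm_nat Ex -act_comp -{1}(act_id y); apply: act_ext => p /=; rewrite Hs.
exists m, (act s x), h; split=> //; split=> //.
apply: Hinj; by rewrite cm_nat -Ey.
Qed.


Section Push.
Variables (S B C P : mcset) (f : mmap S B) (g : mmap S C) (i : mmap B P) (j : mmap C P).
Hypothesis HP : is_pushout f g i j.

Lemma push_uniq (Z : cset) (v1 v2 : cmap P Z) :
  (forall n b, v1 n (i n b) = v2 n (i n b)) -> (forall n c, v1 n (j n c) = v2 n (j n c)) ->
  forall n p, v1 n p = v2 n p.
Proof.
move=> Ei Ej n p.
case: HP => comm univ.
have := univ (Zmax Z) (tomax (ccomp v2 i)) (tomax (ccomp v2 j)).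
case=> [m a|u [Hu1 [Hu2 Hu]]]; first by rewrite /= comm.
rewrite (Hu (tomax v1)) ?(Hu (tomax v2)) //= => m x; by rewrite ?Ei ?Ej.
Qed.

Definition Ipush n (p : cell P n) : Prop := (exists b, p = i n b) \/ (exists c, p = j n c).

Lemma Ipush_cl m n (phi : Hom m n) (p : cell P n) : Ipush p -> Ipush (act phi p).
Proof. by case=> [[b ->]|[c ->]]; [left; exists (act phi b)|right; exists (act phi c)]; rewrite cm_nat. Qed.

Lemma push_gen n (p : cell P n) : Ipush p.
Proof.
apply: (@u12 P (@Ipush) Ipush_cl).
apply: push_uniq => m x /=; apply: sub_eq => /=; congr pair;
  apply: propositional_extensionality; split=> // _; rewrite /Ipush; by [left; exists x | right; exists x].
Qed.
End Push.

Lemma push_sym (S B C P : mcset) (f : mmap S B) (g : mmap S C) (i : mmap B P) (j : mmap C P) :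
  is_pushout f g i j -> is_pushout g f j i.
Proof.
case=> comm univ; split=> [n a|Z h k Hhk]; first by rewrite comm.
case: (univ Z k h) => [n a|u [U1 [U2 U3]]]; first by rewrite Hhk.
exists u; split=> //; split=> // u' H1 H2; exact: U3.
Qed.

Lemma push_entire (S B C P T : mcset) (f : mmap S B) (g : mmap S C) (i : mmap B P) (j : mmap C P)
  (h : mmap P T) (p : mmap B T) (q : mmap C T) :
  is_pushout f g i j -> (forall n b, h n (i n b) = p n b) -> (forall n c, h n (j n c) = q n c) ->
  (exists v : cmap B S, cinv f v) -> (exists w : cmap T C, cinv q w) ->
  exists H : cmap T P, cinv h H.
Proof.
move=> HP Hi Hj [v [v1 v2]] [w [w1 w2]].
exists (ccomp j w); split=> /=; last by move=> n y; rewrite Hj w2.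
apply: (push_uniq HP (v1 := ccomp (ccomp j w) h) (v2 := idcmap P)) => n x /=.
- case: HP => comm _.
  rewrite Hi -{2}(v2 n x) comm; congr (j n _).
  by rewrite -(w1 n (g n (v n x))) -Hj -comm v2 Hi.
- by rewrite Hj w1.
Qed.


Lemma refl_marks o (A' B' X' Y' : mcset) (f' : cmap A' X') (g' : cmap B' Y')
  (P : gprod A' B') (Q : gprod X' Y') (u : mmap (GT o P) (GT o Q)) :
  tensor_map f' g' (mmcmap u) ->
  (forall n a b, f' n a = f' n b -> a = b) -> (forall n a b, g' n a = g' n b -> a = b) ->
  (forall n a, marked (f' n a) -> marked a) -> (forall n b, marked (g' n b) -> marked b) ->
  forall n (z : cell (GT o P) n), marked (u n z) -> marked z.
Proof.
move=> Hu if' ig' rf rg n z Hm.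
case: (gp_cells z) => [dz|[k [l [e [a [b [nda [ndb Ez]]]]]]]]; first exact: marked_deg.
subst z. move: Hm; rewrite (tensor_tens Hu e a b) => Hm.
have ndfa : ~ degenerate (f' k a) by move/(inj_nondeg if').
have ndgb : ~ degenerate (g' l b) by move/(inj_nondeg ig').
have nd : ~ degenerate (tens Q e (f' k a) (g' l b)).
  by apply: ndtens_nondeg; exists k, l, e, (f' k a), (g' l b).
case: o u Hu Hm => u Hu [Hd|[k2 [l2 [e2 [x [y [ndx [ndy [Exy H]]]]]]]]]; try by case: nd.
all: have Ek := tens_dim ndfa ndgb ndx ndy Exy; subst k2.
all: (have El : l2 = l by lia); subst l2.
all: case: (tens_inj Exy) => Ex Ey; subst x y.
all: right; exists k, l, e, a, b; (do 3 split=> //).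
- by case: H => [/rf|/rg]; [left|right].
- move=> H'; apply: H; case: H' => [[k0 nb]|[na l0]]; [left|right]; split=> //.
  + by move/rg.
  + by move/rf.
Qed.


Section Main.
Variables (A B X Y : mcset) (f : mmap A X) (g : mmap B Y)
  (PAB : gprod A B) (PXB : gprod X B) (PAY : gprod A Y) (PXY : gprod X Y).

Lemma part1 o (P : mcset) (i : mmap (GT o PXB) P) (j : mmap (GT o PAY) P) (h : mmap P (GT o PXY)) :
  mono f -> mono g -> leibniz o f g PAB PXB PAY PXY i j h -> regular f -> regular g -> regular h.
Proof.
move=> mf mg [fB [Ag [Xg [fY [tfB [tAg [tXg [tfY [HP [Hi Hj]]]]]]]]]] rf rg n z.
split; first exact: mm_marked.
case: (push_gen HP z) => [[b ->]|[c ->]].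
- rewrite Hi => H; apply: mm_marked; move: H; apply: (refl_marks tXg) => //.

  + move=> m a1 b1 E; exact: (mono_injective mg E).
  + by move=> m b0 /rg.
- rewrite Hj => H; apply: mm_marked; move: H; apply: (refl_marks tfY) => //.
  + move=> m a1 b1 E; exact: (mono_injective mf E).
  + by move=> m b0 /rf.
Qed.

Lemma part2 o (P : mcset) (i : mmap (GT o PXB) P) (j : mmap (GT o PAY) P) (h : mmap P (GT o PXY)) :
  leibniz o f g PAB PXB PAY PXY i j h -> entire f \/ entire g -> exists H : cmap _ _, cinv h H.
Proof.
move=> [fB [Ag [Xg [fY [tfB [tAg [tXg [tfY [HP [Hi Hj]]]]]]]]]] [[v Hv]|[v Hv]].
- have Hid : cinv (idcmap B) (idcmap B) by [].
  have Hid' : cinv (idcmap Y) (idcmap Y) by [].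
  case: (tensor_inv tfB Hv Hid) => w1 [Hw1 _].
  case: (tensor_inv tfY Hv Hid') => w2 [Hw2 _].
  apply: (push_entire HP Hi Hj); [by exists w1 | by exists w2].
- have Hid : cinv (idcmap A) (idcmap A) by [].
  have Hid' : cinv (idcmap X) (idcmap X) by [].
  case: (tensor_inv tAg Hid Hv) => w1 [Hw1 _].
  case: (tensor_inv tXg Hid' Hv) => w2 [Hw2 _].
  apply: (push_entire (push_sym HP) Hj Hi); [by exists w1 | by exists w2].
Qed.

Lemma part3 o (P : mcset) (i : mmap (GT o PXB) P) (j : mmap (GT o PAY) P) (h : mmap P (GT o PXY)) :
  leibniz o f g PAB PXB PAY PXY i j h -> entire f -> entire g -> iso h.
Proof.
move=> L ef eg.
case: (part2 L (or_introl ef)) => H [H1 H2].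
case: ef => vf [vf1 vf2]; case: eg => vg [vg1 vg2].
case: L => [fB [Ag [Xg [fY [tfB [tAg [tXg [tfY [HP [Hi Hj]]]]]]]]]].
suff HM : forall n (w : cell (GT o PXY) n), marked w -> marked (H n w).
  by exists (MMap HM).
move=> n w Hm.
have Hdeg : degenerate w -> marked (H n w) by move=> d; apply: marked_deg; exact: cmap_deg.
have useb : forall k l (e : k + l = n) (x : cell X k) (y : cell Y l), w = tens PXY e x y ->
    marked (tens PXB e x (vg l y) : cell (GT o PXB) n) -> marked (H n w).
  move=> k l e x y Ew Hb; suff -> : H n w = i n (tens PXB e x (vg l y)) by exact: mm_marked.
  by rewrite -(H1 n (i n _)) Hi (tensor_tens tXg) /= vg2 Ew.
have usea : forall k l (e : k + l = n) (x : cell X k) (y : cell Y l), w = tens PXY e x y ->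
    marked (tens PAY e (vf k x) y : cell (GT o PAY) n) -> marked (H n w).
  move=> k l e x y Ew Ha; suff -> : H n w = j n (tens PAY e (vf k x) y) by exact: mm_marked.
  by rewrite -(H1 n (j n _)) Hj (tensor_tens tfY) /= vf2 Ew.
have ndvg : forall l (y : cell Y l), ~ degenerate y -> ~ degenerate (vg l y).
  by move=> l y ny /(cmap_deg g); rewrite vg2.
have ndvf : forall k (x : cell X k), ~ degenerate x -> ~ degenerate (vf k x).
  by move=> k x nx /(cmap_deg f); rewrite vf2.
case: o P i j h H H1 H2 fB Ag Xg fY tfB tAg tXg tfY HP Hi Hj w Hm Hdeg useb usea =>
  P i j h H H1 H2 fB Ag Xg fY tfB tAg tXg tfY HP Hi Hj w
  [Hd|[k [l [e [x [y [ndx [ndy [Ew Hc]]]]]]]]] Hdeg useb usea; try exact: Hdeg.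
- case: Hc => Hc.
  + apply: (useb _ _ e x y Ew); right; exists k, l, e, x, (vg l y).
    split=> //; split; first exact: ndvg. split=> //; by left.
  + apply: (usea _ _ e x y Ew); right; exists k, l, e, (vf k x), y.
    split; first exact: ndvf. split=> //; split=> //; by right.
- case: (classic (marked x)) => Mx.
  + apply: (useb _ _ e x y Ew); right; exists k, l, e, x, (vg l y).
    split=> //; split; first exact: ndvg. split=> //.
    case=> [[k0 _]|[nx _]] //; subst k; exact: (marked_pos Mx).
  + apply: (usea _ _ e x y Ew); right; exists k, l, e, (vf k x), y.
    split; first exact: ndvf. split=> //; split=> //.
    case=> [[k0 ny]|[_ l0]]; apply: Hc; [by left | by right].
Qed.

Lemma part4 (Pl : mcset) (il : mmap (Lax PXB) Pl) (jl : mmap (Lax PAY) Pl) (hl : mmap Pl (Lax PXY))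
  (Pp : mcset) (ip : mmap (Pseudo PXB) Pp) (jp : mmap (Pseudo PAY) Pp)
  (hp : mmap Pp (Pseudo PXY)) (top : mmap Pl Pp) :
  leibniz LaxG f g PAB PXB PAY PXY il jl hl ->
  leibniz PseudoG f g PAB PXB PAY PXY ip jp hp ->
  (forall n (b : cell (Lax PXB) n), top n (il n b) = ip n (mu PXB n b)) ->
  (forall n (c : cell (Lax PAY) n), top n (jl n c) = jp n (mu PAY n c)) ->
  entire f \/ entire g ->
  is_pushout top hl hp (mu PXY).
Proof.
move=> [fBl [Agl [Xgl [fYl [tfBl [tAgl [tXgl [tfYl [HPl [Hil Hjl]]]]]]]]]]
       [fBp [Agp [Xgp [fYp [tfBp [tAgp [tXgp [tfYp [HPp [Hip Hjp]]]]]]]]]] Ti Tj ent.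
have EX : forall n b, Xgp n b = Xgl n b.
  by apply: (gp_uniq (u := mmcmap Xgp) (v := mmcmap Xgl)) => k l x y; rewrite tXgp tXgl.
have EY : forall n b, fYp n b = fYl n b.
  by apply: (gp_uniq (u := mmcmap fYp) (v := mmcmap fYl)) => k l x y; rewrite tfYp tfYl.
split.
  apply: (push_uniq HPl (Z := gp PXY) (v1 := ccomp hp top) (v2 := mmcmap hl)) => n b /=.
  - by rewrite Ti Hil Hip EX.
  - by rewrite Tj Hjl Hjp EY.
move=> Z h' k' Hhk.
have E : forall n p, h' n p = k' n (hp n p).
  apply: (push_uniq HPp (v1 := mmcmap h') (v2 := ccomp k' hp)) => n b /=.
  - by rewrite Hip EX; have := Ti n b => /= <-; rewrite Hhk Hil.
  - by rewrite Hjp EY; have := Tj n b => /= <-; rewrite Hhk Hjl.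
have marks : forall n (w : cell (Pseudo PXY) n), marked w -> marked (k' n w).
  move=> n w Hm.
  case: (classic (lax_marked w)) => Hl; first exact: (@mm_marked _ _ k' n w Hl).
  case: Hm => [Hd|[k [l [e [x [y [ndx [ndy [Ew Hc]]]]]]]]]; first by case: Hl; left.
  have nx : ~ marked x.
    by move=> Mx; apply: Hl; right; exists k, l, e, x, y; do 3 split=> //; left.
  have ny : ~ marked y.
    by move=> My; apply: Hl; right; exists k, l, e, x, y; do 3 split=> //; right.
  have k0 : k <> 0 by move=> k0; apply: Hc; left.
  have l0 : l <> 0 by move=> l0; apply: Hc; right.
  case: ent => [[vf [vf1 vf2]]|[vg [vg1 vg2]]].
  + have Ma : marked (tens PAY e (vf k x) y : cell (Pseudo PAY) n).
      right; exists k, l, e, (vf k x), y; split.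
        by move=> /(cmap_deg f); rewrite vf2.
      split=> //; split=> //; by case=> [[]|[]].
    have := mm_marked h' (mm_marked jp Ma).
    by rewrite E Hjp (tensor_tens tfYp) /= vf2 -Ew.
  + have Mb : marked (tens PXB e x (vg l y) : cell (Pseudo PXB) n).
      right; exists k, l, e, x, (vg l y); split=> //; split.
        by move=> /(cmap_deg g); rewrite vg2.
      split=> //; by case=> [[]|[]].
    have := mm_marked h' (mm_marked ip Mb).
    by rewrite E Hip (tensor_tens tXgp) /= vg2 -Ew.
exists (@MMap (Pseudo PXY) Z (mmcmap k') marks); split.
  by move=> n b /=; rewrite E.
split=> // u' _ Hu' n p; exact: Hu'.
Qed.
End Main.


Theorem lemma2p11 (A B X Y : mcset) (f : mmap A X) (g : mmap B Y)
  (PAB : gprod A B) (PXB : gprod X B) (PAY : gprod A Y) (PXY : gprod X Y) :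
  mono f -> mono g ->
  (* parts (1)-(3), for o = lax or pseudo Gray tensor *)
  (forall (o : gray) (P : mcset) (i : mmap (GT o PXB) P) (j : mmap (GT o PAY) P)
          (h : mmap P (GT o PXY)),
     leibniz o f g PAB PXB PAY PXY i j h ->
     (regular f -> regular g -> regular h) /\
     (entire f \/ entire g -> entire h) /\
     (entire f -> entire g -> iso h)) /\
  (* part (4) *)
  (forall (Pl : mcset) (il : mmap (Lax PXB) Pl) (jl : mmap (Lax PAY) Pl)
          (hl : mmap Pl (Lax PXY))
          (Pp : mcset) (ip : mmap (Pseudo PXB) Pp) (jp : mmap (Pseudo PAY) Pp)
          (hp : mmap Pp (Pseudo PXY)) (top : mmap Pl Pp),
     leibniz LaxG f g PAB PXB PAY PXY il jl hl ->
     leibniz PseudoG f g PAB PXB PAY PXY ip jp hp ->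
     (forall n (b : cell (Lax PXB) n), top n (il n b) = ip n (mu PXB n b)) ->
     (forall n (c : cell (Lax PAY) n), top n (jl n c) = jp n (mu PAY n c)) ->
     entire f \/ entire g ->
     is_pushout top hl hp (mu PXY)).
Proof.
move=> mf mg; split.
- move=> o P i j h L; split; first by move=> rf rg; exact: (part1 mf mg L).
  split; first by move=> E; case: (part2 L E) => H HH; exists H.
  exact: part3 L.
- move=> Pl il jl hl Pp ip jp hp top L1 L2 T1 T2 E; exact: (part4 L1 L2 T1 T2 E).
Qed.
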